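(* Let $k\ge1$, $A,B_1,\dots,B_k,C_1,\dots,C_k\in\mathbb{C}^{r\times r}$ with $AB_j=B_jA$, $B_jB_l=B_lB_j$, $C_jC_l=C_lC_j$ for all $j,l$, and $C_j+mI$ invertible for all $m\ge0$ and all $j$. Fix $i$ and $n\ge1$ and suppose $C_i-mI$ is invertible for all $0\le m\le n$. Then $$F_{\mathcal A}[C_i-nI]=F_{\mathcal A}+x_iAB_i\Big[\sum_{n_1=1}^nF_{\mathcal A}[A+I,\,B_i+I,\,C_i+(2-n_1)I]\,(C_i-n_1I)^{-1}(C_i-(n_1-1)I)^{-1}\Big].$$
   Context: For $M\in\mathbb{C}^{r\times r}$: $(M)_0=I$, $(M)_m=M(M+I)\cdots(M+(m-1)I)$, $(M)^{-1}_m=((M)_m)^{-1}$. $$F_{\mathcal A}=F_{\mathcal A}[A,B_1,\dots,B_k;C_1,\dots,C_k;x_1,\dots,x_k]=\sum_{m_1,\dots,m_k\ge0}(A)_{m_1+\cdots+m_k}\prod_{j=1}^k(B_j)_{m_j}\prod_{j=1}^k(C_j)^{-1}_{m_j}\prod_{j=1}^k\frac{x_j^{m_j}}{m_j!},$$ $x_j$ scalar variables, matrix products in order of increasing index; identities are of formal power series in the $x_j$. $F_{\mathcal A}[\dots]$ lists only the shifted parameters, all others unchanged. *)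

(* Defs.v *)
From HB Require Import structures.
From mathcomp Require Import all_boot all_order all_algebra.
From mathcomp Require Import reals complex.
Set Implicit Arguments. Unset Strict Implicit. Unset Printing Implicit Defensive.
Import Order.TTheory GRing.Theory Num.Theory.
Local Open Scope ring_scope.

Fixpoint mpoch (F : comPzRingType) (r : nat) (M : 'M[F]_r) (m : nat) : 'M[F]_r :=
  match m with
  | 0 => 1%:M
  | m'.+1 => mpoch M m' *m (M + (m'%:R)%:M)
  end.

Definition mpochinv (F : comUnitRingType) (r : nat) (M : 'M[F]_r) (m : nat) : 'M[F]_r :=
  invmx (mpoch M m).

Notation multi k := {ffun 'I_k -> nat}.

(* Coefficient of x_1^{m_1}...x_k^{m_k} in the formal power series
   F_A[A, B_1..B_k; C_1..C_k; x_1..x_k]; matrix products in increasing index order. *)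
Definition FAcoef (F : fieldType) (r k : nat) (A : 'M[F]_r) (B C : 'I_k -> 'M[F]_r)
  (m : multi k) : 'M[F]_r :=
  ((\prod_(j < k) (m j)`!)%:R)^-1 *:
  (mpoch A (\sum_(j < k) m j)
   *m (\big[mulmx/1%:M]_(j < k) mpoch (B j) (m j))
   *m (\big[mulmx/1%:M]_(j < k) mpochinv (C j) (m j))).

(* Multi-index m - e_i (only used when m i >= 1). *)
Definition mdec (k : nat) (m : multi k) (i : 'I_k) : multi k :=
  [ffun j => if j == i then (m j).-1 else m j].

Definition mupd (F : pzRingType) (r k : nat) (B : 'I_k -> 'M[F]_r) (i : 'I_k) (X : 'M[F]_r)
  : 'I_k -> 'M[F]_r := fun j => if j == i then X else B j.

Definition Cc (R : realType) := (R[i])%type.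

(* Main.v *)
Require Import Defs.
From HB Require Import structures.
From mathcomp Require Import all_boot all_order all_algebra.
From mathcomp Require Import reals complex.
Import Order.TTheory GRing.Theory Num.Theory.
Local Open Scope ring_scope.

Set Implicit Arguments. Unset Strict Implicit.

Section Aux.
Variable R : realType.
Variable r' : nat.
Local Notation M := ('M[R[i]]_r'.+1).

Definition bic (P : M -> Prop) (x : M) :=
  forall y : M, (forall z, P z -> GRing.comm y z) -> GRing.comm x y.

Lemma bicP (P : M -> Prop) z : (forall z w, P z -> P w -> GRing.comm z w) -> P z -> bic P z.
Proof. by move=> hP Pz y hy; apply/commr_sym/hy. Qed.

Lemma bicC (P : M -> Prop) x y : (forall z w, P z -> P w -> GRing.comm z w) ->
  bic P x -> bic P y -> GRing.comm x y.
Proof. by move=> hP hx hy; apply: hx => z Pz; apply: hy => w Pw; apply: hP. Qed.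

Lemma bicM P x y : bic P x -> bic P y -> bic P (x * y).
Proof. by move=> hx hy z hz; apply/commr_sym/commrM; apply/commr_sym; [exact: hx|exact: hy]. Qed.
Lemma bicD P x y : bic P x -> bic P y -> bic P (x + y).
Proof. by move=> hx hy z hz; apply/commr_sym/commrD; apply/commr_sym; [exact: hx|exact: hy]. Qed.
Lemma bicN P x : bic P x -> bic P (- x).
Proof. by move=> hx z hz; apply/commr_sym/commrN; apply/commr_sym; exact: hx. Qed.
Lemma bicB P x y : bic P x -> bic P y -> bic P (x - y).
Proof. by move=> hx hy; apply: bicD => //; apply: bicN. Qed.
Lemma bicV P x : bic P x -> bic P (x^-1).
Proof. by move=> hx z hz; apply/commr_sym/commrV; apply/commr_sym; exact: hx. Qed.
Lemma bic_nat P n : bic P n%:R.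
Proof. by move=> z _; apply/commr_sym/commr_nat. Qed.
Lemma bic1 P : bic P 1.
Proof. by move=> z _; apply/commr_sym/commr1. Qed.

Lemma mpochS (X : M) m : mpoch X m.+1 = mpoch X m * (X + m%:R).
Proof. by rewrite /= rmorph_nat. Qed.

Lemma bic_mpoch P X m : bic P X -> bic P (mpoch X m).
Proof.
move=> hX; elim: m => [|m IH]; first exact: bic1.
by rewrite mpochS; apply: bicM => //; apply: bicD => //; apply: bic_nat.
Qed.

Lemma bic_mpochinv P X m : bic P X -> bic P (mpochinv X m).
Proof. by move=> hX; apply: bicV; apply: bic_mpoch. Qed.

Lemma mpoch_shift (X : M) m : mpoch X m.+1 = X * mpoch (X + 1) m.
Proof.
elim: m => [|m IH]; first by rewrite mpochS /= mulr0n addr0 mul1r mulr1.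
rewrite mpochS IH mpochS -mulrA; congr (_ * (_ * _)).
by rewrite -addrA mulrS.
Qed.

Lemma mpoch_unit (X : M) m : (forall s, (s < m)%N -> X + s%:R \is a GRing.unit) ->
  mpoch X m \is a GRing.unit.
Proof.
elim: m => [|m IH] h; first exact: unitr1.
rewrite mpochS unitrMl; last exact: h.
by apply: IH => s hs; apply: h; apply: ltnW.
Qed.

Lemma pull_seq k (G G' : 'I_k -> M) (i : 'I_k) (X : M) (s : seq 'I_k) :
  (forall j, j != i -> G' j = G j) -> G' i = X * G i ->
  (forall j, j != i -> GRing.comm X (G j)) -> uniq s ->
  \big[mulmx/1%:M]_(j <- s) G' j =
  if i \in s then X * \big[mulmx/1%:M]_(j <- s) G j else \big[mulmx/1%:M]_(j <- s) G j.
Proof.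
move=> hG hi hX; elim: s => [|a s IH]; first by rewrite !big_nil.
rewrite /= => /andP[an us]; rewrite !big_cons in_cons IH //.
have [ai|ai] := eqVneq a i.
  subst a; rewrite ?eqxx /= (negPf an) hi.
  change ((X * G i) * \big[mulmx/1%:M]_(j <- s) G j = X * (G i * \big[mulmx/1%:M]_(j <- s) G j)).
  by rewrite mulrA.
rewrite ?(negPf ai) /= hG //.
case: (i \in s) => //.
change (G a * (X * \big[mulmx/1%:M]_(j <- s) G j) = X * (G a * \big[mulmx/1%:M]_(j <- s) G j)).
by rewrite !mulrA (hX a ai).
Qed.

Lemma pull k (G G' : 'I_k -> M) (i : 'I_k) (X : M) :
  (forall j, j != i -> G' j = G j) -> G' i = X * G i ->
  (forall j, j != i -> GRing.comm X (G j)) ->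
  \big[mulmx/1%:M]_(j < k) G' j = X * \big[mulmx/1%:M]_(j < k) G j.
Proof.
move=> h1 h2 h3; rewrite (pull_seq h1 h2 h3 (index_enum_uniq _)).
by rewrite mem_index_enum.
Qed.


Lemma bicD_gen (D : M) : forall z w, z = D -> w = D -> GRing.comm z w.
Proof. by move=> z w -> ->; apply: commr_refl. Qed.

Lemma tel (D : M) p (hD : forall s, D + s%:R \is a GRing.unit) :
  (mpoch D p.+1)^-1 - (mpoch (D+1) p.+1)^-1 =
  (p.+1)%:R * (mpoch (D + 2%:R) p)^-1 * D^-1 * (D+1)^-1.
Proof.
set Q := mpoch (D + 2%:R) p.
have bD : bic (fun z => z = D) D by apply: bicP => //; apply: bicD_gen.
have e1 : mpoch (D+1) p.+1 = (D+1) * Q by rewrite mpoch_shift -addrA -mulr2n.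
have e2 : mpoch D p.+1 * (D + p.+1%:R) = D * ((D+1)*Q) by rewrite -mpochS mpoch_shift e1.
have uD : D \is a GRing.unit by have := hD 0%N; rewrite addr0.
have uD1 : D + 1 \is a GRing.unit by apply: hD 1%N.
have uQ : Q \is a GRing.unit.
  by apply: mpoch_unit => s _; rewrite -addrA -natrD; apply: hD.
have uW : D * ((D+1)*Q) \is a GRing.unit by rewrite unitrMl ?unitrMl.
have uP : mpoch D p.+1 \is a GRing.unit by apply: mpoch_unit => s _; apply: hD.
apply: (mulIr uW).
rewrite mulrBl -{1}e2 (mulKr uP) -e1.
have cm : GRing.comm (mpoch (D + 1) p.+1)^-1 D.
  apply: (bicC (@bicD_gen D)) => //; apply: bic_mpochinv; apply: bicD => //; apply: bic1.
have uP1 : mpoch (D + 1) p.+1 \is a GRing.unit by rewrite e1 unitrMl.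
rewrite [_^-1 * (D * _)]mulrA cm -[D * _ * _]mulrA (mulVr uP1).
rewrite mulr1 addrAC subrr add0r e1.
have cm2 : GRing.comm (D+1)^-1 D.
  by apply: (bicC (@bicD_gen D)) => //; apply: bicV; apply: bicD => //; apply: bic1.
rewrite -!mulrA [(D + 1)^-1 * (D * _)]mulrA cm2 -mulrA mulKr // mulKr // mulVr // mulr1 //.
Qed.


Lemma shift_unit (C : M) a :
  (forall s, C + s%:R \is a GRing.unit) ->
  (forall s, (s <= a)%N -> C - s%:R \is a GRing.unit) ->
  forall s, (C - a%:R) + s%:R \is a GRing.unit.
Proof.
move=> h1 h2 s; case: (leqP s a) => hs.
  have -> : C - a%:R + s%:R = C - (a - s)%:R.
    by rewrite natrB // opprB addrA [RHS]addrAC.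
  by apply: h2; apply: leq_subr.
have -> : C - a%:R + s%:R = C + (s - a)%:R.
  by rewrite natrB ?(ltnW hs) // addrA [LHS]addrAC.
exact: h1.
Qed.

Lemma core (C : M) n p (hC : forall s, C + s%:R \is a GRing.unit)
  (hCi : forall s, (s <= n)%N -> C - s%:R \is a GRing.unit) :
  (mpoch (C - n%:R) p.+1)^-1 * mpoch C p.+1 - 1 =
  \sum_(1 <= n1 < n.+1) ((mpoch (C + 2%:R - n1%:R) p)^-1 * mpoch C p.+1
      * (C - n1%:R)^-1 * (C - n1.-1%:R)^-1) *+ p.+1.
Proof.
set E := fun t : nat => (mpoch (C - t%:R) p.+1)^-1.
set P := mpoch C p.+1.
have uP : P \is a GRing.unit by apply: mpoch_unit => s _; apply: hC.
rewrite -[X in _ * _ - X](mulVr uP).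
have -> : P^-1 = E 0%N by rewrite /E subr0.
rewrite (_ : (mpoch (C - n%:R) p.+1)^-1 = E n) // -mulrBl -(telescope_sumr E (leq0n n)) big_add1 /= mulr_suml.
apply: eq_big_nat => t /andP[_ htn].
have ht : forall s, (C - t.+1%:R) + s%:R \is a GRing.unit.
  by apply: shift_unit => // s hs; apply: hCi; apply: leq_trans hs htn.
set D := C - t.+1%:R.
have eD1 : C - t%:R = D + 1 by rewrite /D mulrS opprD addrA [RHS]addrAC subrK.
have eD2 : C + 2%:R - t.+1%:R = D + 2%:R by rewrite /D addrAC.
rewrite /E -/D eD1 eD2 tel //.
have bC : bic (fun z => z = C) C by apply: bicP => //; apply: bicD_gen.
have bD : bic (fun z => z = C) D by apply: bicB => //; apply: bic_nat.
have cP : GRing.comm P (D^-1 * (D+1)^-1).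
  apply: (bicC (@bicD_gen C)); first by apply: bic_mpoch.
  by apply: bicM; apply: bicV => //; apply: bicD => //; apply: bic1.
clearbody P.
set Q := (mpoch (D + 2%:R) p)^-1.
rewrite -!mulrA mulr_natl; congr (_ *+ _); congr (_ * _).
by rewrite [LHS]mulrA -cP.
Qed.


Lemma mpochinvE (X : M) m : mpochinv X m = (mpoch X m)^-1.
Proof. by []. Qed.


Lemma final (sA sB : R[i]) (A Bi PA' PB' PH Xn : M) (Y V1 V2 : nat -> M) (lo hi p : nat) :
  GRing.comm Bi PA' -> (forall n1, GRing.comm PH (V1 n1 * V2 n1)) ->
  Xn - 1 = \sum_(lo <= n1 < hi) (Y n1 * V1 n1 * V2 n1) *+ p.+1 ->
  sA * p.+1%:R = sB ->
  sA *: (A * PA' * (Bi * PB') * (Xn * PH)) =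
  sA *: (A * PA' * (Bi * PB') * PH) +
  A * Bi * \sum_(lo <= n1 < hi) (sB *: (PA' * PB' * (Y n1 * PH)) * V1 n1 * V2 n1).
Proof.
move=> cBA cHV eX hs.
set X := A * PA' * (Bi * PB').
rewrite -[LHS](subrK (sA *: (X * PH))) addrC; congr (_ + _).
rewrite -scalerBr -mulrBr -[X in _ - X]mul1r -mulrBl eX.
rewrite mulr_suml mulr_sumr scaler_sumr mulr_sumr; apply: eq_bigr => n1 _.
rewrite mulrnAl mulrnAr -scaler_nat scalerA hs.
rewrite -!scalerAl -scalerAr; congr (_ *: _).
rewrite /X -!mulrA (cHV n1) -!mulrA.
by rewrite [Bi * (PA' * _)]mulrA cBA -mulrA.
Qed.

End Aux.

Unset Implicit Arguments.

Theorem mainTheorem4 (R : realType) (r k : nat)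
  (A : 'M[R[i]]_r) (B C : 'I_k -> 'M[R[i]]_r)
  (hAB : forall j, A *m B j = B j *m A)
  (hBB : forall j l, B j *m B l = B l *m B j)
  (hCC : forall j l, C j *m C l = C l *m C j)
  (hC : forall j (m : nat), C j + (m%:R)%:M \in unitmx)
  (i : 'I_k) (n : nat) (hn : (1 <= n)%N)
  (hCi : forall m : nat, (m <= n)%N -> C i - (m%:R)%:M \in unitmx) :
  forall m : multi k,
    FAcoef A B (mupd C i (C i - (n%:R)%:M)) m =
    FAcoef A B C m +
    (if (0 < m i)%N then
       A *m B i *m
       (\sum_(1 <= n1 < n.+1)
          FAcoef (A + 1%:M) (mupd B i (B i + 1%:M))
                 (mupd C i (C i + 2%:R%:M - (n1%:R)%:M)) (mdec m i)
          *m invmx (C i - (n1%:R)%:M)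
          *m invmx (C i - ((n1.-1)%:R)%:M))
     else 0).
Proof.
case: r A B C hAB hBB hCC hC hCi => [|r'] A B C hAB hBB hCC hC hCi m.
  by apply/matrixP => -[].
rewrite /FAcoef; case hmi: (m i) => [|p] /=.
  rewrite addr0; congr (_ *: (_ *m _)); apply: eq_bigr => j _.
  rewrite /mupd; case: (eqVneq j i) => [->|//]; by rewrite hmi.
set N' := \sum_(j < k) mdec m i j.
have mdi : mdec m i i = p by rewrite /mdec ffunE eqxx hmi.
have mdj : forall j, j != i -> mdec m i j = m j by move=> j hj; rewrite /mdec ffunE (negPf hj).
have hN : \sum_(j < k) m j = N'.+1.
  rewrite /N' (bigD1 i) //= [in RHS](bigD1 i) //= mdi hmi; congr (_ + _)%N.
  by apply: eq_bigr => j hj; rewrite mdj.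
have hF : \prod_(j < k) (m j)`! = (p.+1 * \prod_(j < k) (mdec m i j)`!)%N.
  rewrite (bigD1 i) //= [in RHS](bigD1 i) //= mdi hmi factS.
  rewrite (eq_bigr (fun j => (m j)`!) (fun j hj => congr1 _ (mdj j hj))).
  by rewrite mulnA.
rewrite hN.
pose PAB := fun z : 'M[R[i]]_r'.+1 => z = A \/ exists j, z = B j.
have hPAB : forall z w, PAB z -> PAB w -> GRing.comm z w.
  move=> z w [->|[j ->]] [->|[l ->]].
  - exact: commr_refl.
  - exact: hAB.
  - exact/commr_sym/hAB.
  - exact: hBB.
pose PC := fun z : 'M[R[i]]_r'.+1 => exists j, z = C j.
have hPC : forall z w, PC z -> PC w -> GRing.comm z w.
  move=> z w [j ->] [l ->]; exact: (hCC j l).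
have bB : forall j, bic PAB (B j) by move=> j; apply: bicP => //; right; exists j.
have bA : bic PAB A by apply: bicP => //; left.
have bCj : forall j, bic PC (C j) by move=> j; apply: bicP => //; exists j.
have hPB : \big[mulmx/1%:M]_(j < k) mpoch (B j) (m j) =
   B i * \big[mulmx/1%:M]_(j < k) mpoch (mupd B i (B i + 1%:M) j) (mdec m i j).
  apply: (pull (i := i)).
  - by move=> j hj; rewrite /mupd (negPf hj) mdj.
  - by rewrite /mupd eqxx mdi hmi mpoch_shift.
  - move=> j hj; rewrite /mupd (negPf hj); apply: (bicC hPAB) => //.
    by apply: bic_mpoch.
have hCu : forall j s, C j + s%:R \is a GRing.unit.
  by move=> j s; have := hC j s; rewrite rmorph_nat.
have hCiu : forall s, (s <= n)%N -> C i - s%:R \is a GRing.unit.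
  by move=> s hs; have := hCi s hs; rewrite rmorph_nat.
have uP : mpoch (C i) p.+1 \is a GRing.unit by apply: mpoch_unit => s _; apply: hCu.
have ePC : \big[mulmx/1%:M]_(j < k) mpochinv (mupd C i (C i - (n%:R)%:M) j) (m j) =
   ((mpoch (C i - n%:R) p.+1)^-1 * mpoch (C i) p.+1) *
   \big[mulmx/1%:M]_(j < k) mpochinv (C j) (m j).
  apply: (pull (i := i)).
  - by move=> j hj; rewrite /mupd (negPf hj).
  - by rewrite /mupd eqxx hmi !mpochinvE rmorph_nat -mulrA divrr ?mulr1.
  - move=> j hj; apply: (bicC hPC); last by apply: bic_mpochinv.
    apply: bicM; last by apply: bic_mpoch.
    by apply: bic_mpochinv; apply: bicB => //; apply: bic_nat.
have hK : forall n1 : nat,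
   \big[mulmx/1%:M]_(j < k) mpochinv (mupd C i (C i + 2%:R%:M - (n1%:R)%:M) j) (mdec m i j) =
   ((mpoch (C i + 2%:R - n1%:R) p)^-1 * mpoch (C i) p.+1) *
   \big[mulmx/1%:M]_(j < k) mpochinv (C j) (m j).
  move=> n1; apply: (pull (i := i)).
  - by move=> j hj; rewrite /mupd (negPf hj) mdj.
  - by rewrite /mupd eqxx hmi mdi !mpochinvE !rmorph_nat -mulrA divrr ?mulr1.
  - move=> j hj; apply: (bicC hPC); last by apply: bic_mpochinv.
    apply: bicM; last by apply: bic_mpoch.
    apply: bic_mpochinv; apply: bicB; last by apply: bic_nat.
    by apply: bicD => //; apply: bic_nat.
have hPA : mpoch A N'.+1 = A * mpoch (A + 1%:M) N' by rewrite mpoch_shift.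
rewrite hPA hPB ePC.
under [X in A *m B i *m X]eq_bigr => n1 _ do rewrite hK !rmorph_nat.
apply: (@final _ _ _ _ _ _ _ _ _ _ (fun n1 : nat => (mpoch (C i + 2%:R - n1%:R) p)^-1 * mpoch (C i) p.+1)
   (fun n1 : nat => invmx (C i - n1%:R)) (fun n1 : nat => invmx (C i - n1.-1%:R))).
- apply: (bicC hPAB) => //; apply: bic_mpoch; apply: bicD => //; apply: bic1.
- move=> n1; apply: (bicC hPC).
  + by apply: (big_ind (bic PC)) => //; [apply: bic1 | apply: bicM | move=> j _; apply: bic_mpochinv].
  + by apply: bicM; apply: bicV; apply: bicB => //; apply: bic_nat.
- by apply: core => //; apply: hCu.
- rewrite hF natrM invfM mulrAC mulVf ?mul1r //.
  by rewrite pnatr_eq0.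
Qed.
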